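(* Let $I_1>0$, $\delta\in\mathbb{R}$ and let $V:\mathbb{R}\to\mathbb{R}$ be smooth (in the paper $V(s)=c_1s+c_2s^2$). On $\mathbb{R}^4\times\mathbb{R}^3\ni(\bm{x},\bm{l})$ with the Poisson structure $B_+$ (defined in the context), consider \[ H=\frac{1}{2I_1}\big(l_x^2+l_y^2+l_z^2+\delta L_3^2\big)+V(x_0^2+x_3^2-x_1^2-x_2^2), \] \[ L_3=2l_x(-x_0x_2+x_1x_3)+2l_y(x_0x_1+x_2x_3)+l_z(x_0^2+x_3^2-x_1^2-x_2^2), \] and $l_z$. Then: (i) the functions $H$, $l_z$, $L_3$ pairwise Poisson commute with respect to $B_+$; (ii) the Hamiltonian vector field of $H$ satisfies \[ X_H=\frac{1}{2I_1}X_{\bm{l}^2}+\frac{\delta L_3}{I_1}X_{L_3}-\frac12\big(0,0,0,0,\ \bm{x}_+\nabla_{\bm{x}}V\big)^t, \] where $\bm{l}^2=l_x^2+l_y^2+l_z^2$ and $\nabla_{\bm{x}}V$ denotes the gradient with respect to $\bm{x}$ of $\bm{x}\mapsto V(x_0^2+x_3^2-x_1^2-x_2^2)$; (iii) the flows of $X_{l_z}$ and $X_{L_3}$ are periodic and commute, so they generate a (singular) $T^2$-action; (iv) restricted to $M=\{(\bm{x},\bm{l}):|\bm{x}|=1\}$, the vector fields $X_H$, $X_{L_3}$, $X_{l_z}$ are linearly independent on an open dense subset of $M$.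
   Context: For $\bm{x}=(x_0,x_1,x_2,x_3)\in\mathbb{R}^4$ define the $3\times4$ matrices \[ \bm{x}_\pm=\begin{pmatrix} x_1 & -x_0 & \mp x_3 & \pm x_2\\ x_2 & \pm x_3 & -x_0 & \mp x_1\\ x_3 & \mp x_2 & \pm x_1 & -x_0\end{pmatrix}. \] For $\bm{v}\in\mathbb{R}^3$ let $\hat{\bm{v}}$ be the $3\times 3$ skew matrix with $\hat{\bm{v}}\bm{u}=\bm{v}\times\bm{u}$. The Poisson structure $B_+$ on $\mathbb{R}^4\times\mathbb{R}^3$ is given by the $7\times7$ matrix \[ B_+=\begin{pmatrix}0 & \tfrac12\bm{x}_+^t\\ -\tfrac12\bm{x}_+ & -\hat{\bm{l}}\end{pmatrix}, \] i.e. $\{F,G\}=\nabla F^t B_+\nabla G$, and the Hamiltonian vector field of $F$ is $X_F=B_+\nabla F$, so that $\dot{\bm{x}}=\tfrac12\bm{x}_+^t\nabla_{\bm{l}}F$, $\dot{\bm{l}}=-\tfrac12\bm{x}_+\nabla_{\bm{x}}F-\bm{l}\times\nabla_{\bm{l}}F$. The function $|\bm{x}|^2$ is a Casimir. On $|\bm{x}|=1$, $R=\bm{x}_+\bm{x}_-^t\in SO(3)$ and $L_3=\bm{l}\cdot R\bm{e}_3$ with $\bm{e}_3=(0,0,1)^t$. *)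

(* Defs.v *)
From HB Require Import structures.
From mathcomp Require Import all_boot all_order all_algebra.
From mathcomp Require Import all_classical all_reals all_analysis.
Set Implicit Arguments. Unset Strict Implicit. Unset Printing Implicit Defensive.
Import Order.TTheory GRing.Theory Num.Theory.
Import numFieldNormedType.Exports.
Local Open Scope classical_set_scope.
Local Open Scope ring_scope.

Section Defs.
Variable R : realType.

(* A point (x, l) of R^4 x R^3 is a row vector p : 'rV[R]_7 with
   p = (x0, x1, x2, x3, lx, ly, lz). *)
Notation pt := 'rV[R]_7.

Definition x0 (p : pt) : R := p ord0 (@Ordinal 7 0 isT).
Definition x1 (p : pt) : R := p ord0 (@Ordinal 7 1 isT).
Definition x2 (p : pt) : R := p ord0 (@Ordinal 7 2 isT).
Definition x3 (p : pt) : R := p ord0 (@Ordinal 7 3 isT).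
Definition lx (p : pt) : R := p ord0 (@Ordinal 7 4 isT).
Definition ly (p : pt) : R := p ord0 (@Ordinal 7 5 isT).
Definition lz (p : pt) : R := p ord0 (@Ordinal 7 6 isT).

Definition xplus (p : pt) : 'M[R]_(3,4) :=
  \matrix_(i < 3, j < 4)
    (nth [::] [:: [:: x1 p; - x0 p; - x3 p; x2 p];
                  [:: x2 p; x3 p; - x0 p; - x1 p];
                  [:: x3 p; - x2 p; x1 p; - x0 p]] i)`_j.

(* skew matrix hat v, with (hat v) u = v x u *)
Definition hat (a b c : R) : 'M[R]_3 :=
  \matrix_(i < 3, j < 3)
    (nth [::] [:: [:: 0; - c; b];
                  [:: c; 0; - a];
                  [:: - b; a; 0]] i)`_j.

Definition Bplus (p : pt) : 'M[R]_7 :=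
  block_mx (0 : 'M[R]_(4, 4)) ((2:R)^-1 *: (xplus p)^T)
           (- ((2:R)^-1 *: xplus p)) (- hat (lx p) (ly p) (lz p)).

Definition grad (F : pt -> R) (p : pt) : pt :=
  \row_(i < 7) 'D_(delta_mx ord0 i) F p.

Definition pbracket (F G : pt -> R) (p : pt) : R :=
  (grad F p *m Bplus p *m (grad G p)^T) ord0 ord0.

Definition hamvf (F : pt -> R) (p : pt) : pt :=
  ((Bplus p) *m (grad F p)^T)^T.

Definition sfun (p : pt) : R := x0 p ^+ 2 + x3 p ^+ 2 - x1 p ^+ 2 - x2 p ^+ 2.

Definition L3 (p : pt) : R :=
  2 * lx p * (- x0 p * x2 p + x1 p * x3 p)
  + 2 * ly p * (x0 p * x1 p + x2 p * x3 p)
  + lz p * sfun p.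

Definition lsq (p : pt) : R := lx p ^+ 2 + ly p ^+ 2 + lz p ^+ 2.

Definition Ham (I1 delta : R) (V : R -> R) (p : pt) : R :=
  (2 * I1)^-1 * (lsq p + delta * L3 p ^+ 2) + V (sfun p).

Definition gradx (F : pt -> R) (p : pt) : 'cV[R]_4 :=
  \col_(j < 4) 'D_(delta_mx ord0 (lshift 3 j : 'I_7)) F p.

Definition Vterm (V : R -> R) (p : pt) : pt :=
  row_mx (0 : 'rV[R]_4) (xplus p *m gradx (V \o sfun) p)^T.

Definition smooth (V : R -> R) : Prop :=
  forall (n : nat) (s : R), derivable (derive1n n V) s 1.

Definition Mset : set pt :=
  [set p | x0 p ^+ 2 + x1 p ^+ 2 + x2 p ^+ 2 + x3 p ^+ 2 = 1].

Definition is_flow_on (S : set pt) (X : pt -> pt) (phi : R -> pt -> pt) : Prop :=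
  forall p, S p ->
    phi 0 p = p /\ forall t : R, is_derive t 1 (fun s => phi s p) (X (phi t p)).

Definition open_dense_in (S U : set pt) : Prop :=
  U `<=` S /\ (exists O : set pt, open O /\ U = O `&` S) /\ S `<=` closure U.

End Defs.

(* Main.v *)
Require Import Defs.
From HB Require Import structures.
From mathcomp Require Import all_boot all_order all_algebra.
From mathcomp Require Import all_classical all_reals all_analysis.
From mathcomp Require Import ring lra.
Import Order.TTheory GRing.Theory Num.Theory.
Import numFieldNormedType.Exports.
Local Open Scope classical_set_scope.
Local Open Scope ring_scope.

Section S.
Variable R : realType.
Notation pt := 'rV[R]_7.

Lemma is_derive_coord (p v : pt) (j : 'I_7) :
  is_derive p v (fun q : pt => q ord0 j) (v ord0 j).
Proof.
have @f : {linear pt -> R}.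
  by exists (fun N : pt => N ord0 j); do 2![eexists]; do ?[constructor];
     rewrite ?mxE// => ? *; rewrite ?mxE//; move=> ?; rewrite !mxE.
have -> : (fun q : pt => q ord0 j) = f by [].
apply: DeriveDef.
  by apply: diff_derivable; apply: linear_differentiable; exact: coord_continuous.
rewrite deriveE; last by apply: linear_differentiable; exact: coord_continuous.
by rewrite diff_lin //; exact: coord_continuous.
Qed.

Definition id_x0 p v : is_derive p v (@x0 R) (x0 v) := is_derive_coord p v _.
Definition id_x1 p v : is_derive p v (@x1 R) (x1 v) := is_derive_coord p v _.
Definition id_x2 p v : is_derive p v (@x2 R) (x2 v) := is_derive_coord p v _.
Definition id_x3 p v : is_derive p v (@x3 R) (x3 v) := is_derive_coord p v _.
Definition id_lx p v : is_derive p v (@lx R) (lx v) := is_derive_coord p v _.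
Definition id_ly p v : is_derive p v (@ly R) (ly v) := is_derive_coord p v _.
Definition id_lz p v : is_derive p v (@lz R) (lz v) := is_derive_coord p v _.

Definition dsfun (p : pt) v : R :=
  2 * (x0 p * x0 v + x3 p * x3 v - x1 p * x1 v - x2 p * x2 v).

Lemma is_derive_sfun p v : is_derive p v (@Defs.sfun R) (dsfun p v).
Proof.
have := is_deriveB (is_deriveB (is_deriveD (is_deriveX 2 (id_x0 p v))
   (is_deriveX 2 (id_x3 p v))) (is_deriveX 2 (id_x1 p v))) (is_deriveX 2 (id_x2 p v)).
move=> H; apply: is_derive_eq H _.
rewrite /dsfun /= -![_ *: _]/(_ * _) ?fctE; ring.
Qed.

Definition dL3 (p v : pt) : R :=
  2 * lx v * (- x0 p * x2 p + x1 p * x3 p)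
  + 2 * lx p * (- x0 v * x2 p - x0 p * x2 v + x1 v * x3 p + x1 p * x3 v)
  + 2 * ly v * (x0 p * x1 p + x2 p * x3 p)
  + 2 * ly p * (x0 v * x1 p + x0 p * x1 v + x2 v * x3 p + x2 p * x3 v)
  + lz v * Defs.sfun p + lz p * dsfun p v.

Lemma is_derive_L3 p v : is_derive p v (@L3 R) (dL3 p v).
Proof.
have := is_deriveD (is_deriveD
  (is_deriveM (is_deriveM (is_derive_cst (2:R) p v) (id_lx p v))
     (is_deriveD (is_deriveM (is_deriveN (id_x0 p v)) (id_x2 p v)) (is_deriveM (id_x1 p v) (id_x3 p v))))
  (is_deriveM (is_deriveM (is_derive_cst (2:R) p v) (id_ly p v))
     (is_deriveD (is_deriveM (id_x0 p v) (id_x1 p v)) (is_deriveM (id_x2 p v) (id_x3 p v)))))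
  (is_deriveM (id_lz p v) (is_derive_sfun p v)).
move=> H; apply: is_derive_eq H _.
rewrite /dL3 /dsfun /= -![_ *: _]/(_ * _) ?fctE; rewrite /cst /=; ring.
Qed.

Definition dlsq (p v : pt) : R := 2 * (lx p * lx v + ly p * ly v + lz p * lz v).

Lemma is_derive_lsq p v : is_derive p v (@lsq R) (dlsq p v).
Proof.
have := is_deriveD (is_deriveD (is_deriveX 2 (id_lx p v))
   (is_deriveX 2 (id_ly p v))) (is_deriveX 2 (id_lz p v)).
move=> H; apply: is_derive_eq H _.
rewrite /dlsq /= -![_ *: _]/(_ * _) ?fctE; ring.
Qed.

Definition dVs (V : R -> R) (p v : pt) : R := 'D_1 V (Defs.sfun p) * dsfun p v.

Lemma D1E (F : pt -> R) p v : 'D_v F p = 'D_1 (fun h : R => F (h *: v + p)) 0.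
Proof.
rewrite /derive; set g1 := fun h => h^-1 *: _; set g2 := fun h => h^-1 *: _.
suff -> : g1 = g2 by [].
by rewrite funeqE /g1 /g2 => h /=; rewrite addr0 scale0r add0r [_%:A]mulr1.
Qed.

Lemma is_derive_chain (f : pt -> R) (g : R -> R) p v df :
  is_derive p v f df -> derivable g (f p) 1 ->
  is_derive p v (g \o f) ('D_1 g (f p) * df).
Proof.
move=> [fd <-] gd.
set G := fun h : R => f (h *: v + p).
have G0 : G 0 = f p by rewrite /G scale0r add0r.
have dG : is_derive (0:R) 1 G ('D_v f p).
  apply: DeriveDef; first by move/derivable1P: fd.
  by rewrite D1E.
have dg : is_derive (G 0) 1 g ('D_1 g (f p)) by rewrite G0; exact: derivableP.
have := is_derive1_comp dg dG => -[dd ee].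
apply: DeriveDef; first by apply/derivable1P; exact: dd.
by rewrite D1E; exact: ee.
Qed.

Lemma is_derive_Vs (V : R -> R) (hV : smooth V) p v :
  is_derive p v (V \o @Defs.sfun R) (dVs V p v).
Proof. exact: is_derive_chain (is_derive_sfun p v) (hV 0%N _). Qed.

Definition dHam I1 delta V (p v : pt) : R :=
  (2 * I1)^-1 * (dlsq p v + delta * (2 * L3 p * dL3 p v)) + dVs V p v.

Lemma is_derive_Ham I1 delta V (hV : smooth V) p v :
  is_derive p v (Ham I1 delta V) (dHam I1 delta V p v).
Proof.
have := is_deriveD (is_deriveM (is_derive_cst ((2 * I1)^-1) p v)
   (is_deriveD (is_derive_lsq p v) (is_deriveM (is_derive_cst delta p v) (is_deriveX 2 (is_derive_L3 p v)))))
   (is_derive_Vs V hV p v).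
move=> H; apply: is_derive_eq H _.
rewrite /dHam /= -![_ *: _]/(_ * _) ?fctE; rewrite /cst /=; ring.
Qed.

Lemma gradE (F : pt -> R) dF p : (forall v, is_derive p v F (dF v)) ->
  grad F p = \row_i dF (delta_mx ord0 i).
Proof. by move=> H; apply/rowP => i; rewrite !mxE derive_val. Qed.

Definition Bx (p : pt) : 'M[R]_7 :=
  let a := x0 p in let b := x1 p in let c := x2 p in let d := x3 p in
  let h := (2:R)^-1 in
  \matrix_(i < 7, j < 7)
   (nth [::] [::
     [:: 0; 0; 0; 0; h * b; h * c; h * d];
     [:: 0; 0; 0; 0; - h * a; h * d; - h * c];
     [:: 0; 0; 0; 0; - h * d; - h * a; h * b];
     [:: 0; 0; 0; 0; h * c; - h * b; - h * a];
     [:: - h * b; h * a; h * d; - h * c; 0; lz p; - ly p];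
     [:: - h * c; - h * d; h * a; h * b; - lz p; 0; lx p];
     [:: - h * d; h * c; - h * b; h * a; ly p; - lx p; 0]] i)`_j.

Lemma ordL {k : nat} (Hk : (k < 7)%N) (H4 : (k < 4)%N) :
  @eq 'I_7 (Ordinal Hk) (lshift 3 (Ordinal H4)).
Proof. exact: val_inj. Qed.
Lemma ordR {k : nat} (Hk : (k < 7)%N) (H4 : (k - 4 < 3)%N) (H : (4 <= k)%N) :
  @eq 'I_7 (Ordinal Hk) (rshift 4 (Ordinal H4)).
Proof. by apply: val_inj => /=; rewrite subnKC. Qed.

Lemma splitL (i : 'I_4) : fintype.split (lshift 3 i) = inl i.
Proof. exact: (unsplitK (inl i)). Qed.
Lemma splitR (i : 'I_3) : fintype.split (rshift 4 i) = inr i.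
Proof. exact: (unsplitK (inr i)). Qed.

Lemma Bplus_expl p : Bplus p = Bx p.
Proof.
apply/matrixP => i j; rewrite /Bplus [RHS]mxE.
case: i => [[|[|[|[|[|[|[|//]]]]]]] Hi];
  (rewrite ?(ordL Hi isT) ?(ordR Hi isT isT));
case: j => [[|[|[|[|[|[|[|//]]]]]]] Hj];
  (rewrite ?(ordL Hj isT) ?(ordR Hj isT isT));
  rewrite !(mxE, splitL, splitR) /=;
  rewrite /x0 /x1 /x2 /x3 /lx /ly /lz; try ring.
Qed.

Definition row7 (l : seq R) : pt := \row_(i < 7) l`_i.

Lemma grad_L3 p : grad (@L3 R) p = row7
  [:: 2 * (- lx p * x2 p + ly p * x1 p + lz p * x0 p);
      2 * (lx p * x3 p + ly p * x0 p - lz p * x1 p);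
      2 * (- lx p * x0 p + ly p * x3 p - lz p * x2 p);
      2 * (lx p * x1 p + ly p * x2 p + lz p * x3 p);
      2 * (- x0 p * x2 p + x1 p * x3 p);
      2 * (x0 p * x1 p + x2 p * x3 p);
      Defs.sfun p].
Proof.
rewrite (gradE _ _ _ (is_derive_L3 p)); apply/rowP => i; rewrite !mxE.
case: i => [[|[|[|[|[|[|[|//]]]]]]] Hi];
rewrite /dL3 /dsfun /x0 /x1 /x2 /x3 /lx /ly /lz !mxE /=; ring.
Qed.
Ltac gradtac := apply/rowP; case => [[|[|[|[|[|[|[|//]]]]]]] Hi]; rewrite !mxE /=;
  rewrite /dHam /dVs /dL3 /dsfun /dlsq /x0 /x1 /x2 /x3 /lx /ly /lz !mxE /=; ring.

Lemma grad_lz p : grad (@lz R) p = row7 [:: 0; 0; 0; 0; 0; 0; 1].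
Proof. rewrite (gradE _ _ _ (id_lz p)); gradtac. Qed.

Lemma grad_lsq p : grad (@lsq R) p = row7 [:: 0; 0; 0; 0; 2 * lx p; 2 * ly p; 2 * lz p].
Proof. rewrite (gradE _ _ _ (is_derive_lsq p)); gradtac. Qed.

Lemma grad_Ham I1 delta V (hV : smooth V) p :
  grad (Ham I1 delta V) p = row7
  [:: (2 * I1)^-1 * ((delta * (2 * L3 p)) * (2 * (- lx p * x2 p + ly p * x1 p + lz p * x0 p))) + 'D_1 V (Defs.sfun p) * (2 * x0 p);
      (2 * I1)^-1 * ((delta * (2 * L3 p)) * (2 * (lx p * x3 p + ly p * x0 p - lz p * x1 p))) - 'D_1 V (Defs.sfun p) * (2 * x1 p);
      (2 * I1)^-1 * ((delta * (2 * L3 p)) * (2 * (- lx p * x0 p + ly p * x3 p - lz p * x2 p))) - 'D_1 V (Defs.sfun p) * (2 * x2 p);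
      (2 * I1)^-1 * ((delta * (2 * L3 p)) * (2 * (lx p * x1 p + ly p * x2 p + lz p * x3 p))) + 'D_1 V (Defs.sfun p) * (2 * x3 p);
      (2 * I1)^-1 * (2 * lx p + (delta * (2 * L3 p)) * (2 * (- x0 p * x2 p + x1 p * x3 p)));
      (2 * I1)^-1 * (2 * ly p + (delta * (2 * L3 p)) * (2 * (x0 p * x1 p + x2 p * x3 p)));
      (2 * I1)^-1 * (2 * lz p + (delta * (2 * L3 p)) * Defs.sfun p)].
Proof. rewrite (gradE _ _ _ (is_derive_Ham I1 delta V hV p)); gradtac. Qed.

Lemma pb7 p a0 a1 a2 a3 a4 a5 a6 b0 b1 b2 b3 b4 b5 b6 :
  (row7 [:: a0; a1; a2; a3; a4; a5; a6] *m Bx p *m (row7 [:: b0; b1; b2; b3; b4; b5; b6])^T) ord0 ord0 =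
  a0 * ((2:R)^-1 * x1 p) * b4 + a0 * ((2:R)^-1 * x2 p) * b5 + a0 * ((2:R)^-1 * x3 p) * b6 + a1 * (- (2:R)^-1 * x0 p) * b4 + a1 * ((2:R)^-1 * x3 p) * b5 + a1 * (- (2:R)^-1 * x2 p) * b6 + a2 * (- (2:R)^-1 * x3 p) * b4 + a2 * (- (2:R)^-1 * x0 p) * b5 + a2 * ((2:R)^-1 * x1 p) * b6 + a3 * ((2:R)^-1 * x2 p) * b4 + a3 * (- (2:R)^-1 * x1 p) * b5 + a3 * (- (2:R)^-1 * x0 p) * b6 + a4 * (- (2:R)^-1 * x1 p) * b0 + a4 * ((2:R)^-1 * x0 p) * b1 + a4 * ((2:R)^-1 * x3 p) * b2 + a4 * (- (2:R)^-1 * x2 p) * b3 + a4 * (lz p) * b5 + a4 * (- ly p) * b6 + a5 * (- (2:R)^-1 * x2 p) * b0 + a5 * (- (2:R)^-1 * x3 p) * b1 + a5 * ((2:R)^-1 * x0 p) * b2 + a5 * ((2:R)^-1 * x1 p) * b3 + a5 * (- lz p) * b4 + a5 * (lx p) * b6 + a6 * (- (2:R)^-1 * x3 p) * b0 + a6 * ((2:R)^-1 * x2 p) * b1 + a6 * (- (2:R)^-1 * x1 p) * b2 + a6 * ((2:R)^-1 * x0 p) * b3 + a6 * (ly p) * b4 + a6 * (- lx p) * b5.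
Proof.
rewrite !mxE !big_ord_recr big_ord0 /= !mxE !big_ord_recr !big_ord0 /= !mxE /=.
ring.
Qed.

Lemma ham7 p b0 b1 b2 b3 b4 b5 b6 :
  (Bx p *m (row7 [:: b0; b1; b2; b3; b4; b5; b6])^T)^T = row7
  [:: ((2:R)^-1 * x1 p) * b4 + ((2:R)^-1 * x2 p) * b5 + ((2:R)^-1 * x3 p) * b6;
      (- (2:R)^-1 * x0 p) * b4 + ((2:R)^-1 * x3 p) * b5 + (- (2:R)^-1 * x2 p) * b6;
      (- (2:R)^-1 * x3 p) * b4 + (- (2:R)^-1 * x0 p) * b5 + ((2:R)^-1 * x1 p) * b6;
      ((2:R)^-1 * x2 p) * b4 + (- (2:R)^-1 * x1 p) * b5 + (- (2:R)^-1 * x0 p) * b6;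
      (- (2:R)^-1 * x1 p) * b0 + ((2:R)^-1 * x0 p) * b1 + ((2:R)^-1 * x3 p) * b2 + (- (2:R)^-1 * x2 p) * b3 + (lz p) * b5 + (- ly p) * b6;
      (- (2:R)^-1 * x2 p) * b0 + (- (2:R)^-1 * x3 p) * b1 + ((2:R)^-1 * x0 p) * b2 + ((2:R)^-1 * x1 p) * b3 + (- lz p) * b4 + (lx p) * b6;
      (- (2:R)^-1 * x3 p) * b0 + ((2:R)^-1 * x2 p) * b1 + (- (2:R)^-1 * x1 p) * b2 + ((2:R)^-1 * x0 p) * b3 + (ly p) * b4 + (- lx p) * b5].
Proof.
apply/rowP => i; rewrite !mxE.
case: i => [[|[|[|[|[|[|[|//]]]]]]] Hi];
rewrite !big_ord_recr big_ord0 /= !mxE /=; ring.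
Qed.


Lemma part_i I1 delta V (hV : smooth V) (hI1 : 0 < I1) (p : pt) :
  pbracket (Ham I1 delta V) (@lz R) p = 0 /\
  pbracket (Ham I1 delta V) (@L3 R) p = 0 /\
  pbracket (@lz R) (@L3 R) p = 0.
Proof.
rewrite /pbracket (grad_Ham I1 delta V hV) grad_lz grad_L3 Bplus_expl !pb7.
rewrite /L3 /Defs.sfun. split; last split.
all: try ring.
all: field; rewrite ?gt_eqF //.
Qed.

Lemma gradx_Vs V (hV : smooth V) p : gradx (V \o @Defs.sfun R) p =
  \col_(j < 4) [:: 'D_1 V (Defs.sfun p) * (2 * x0 p); - ('D_1 V (Defs.sfun p) * (2 * x1 p));
     - ('D_1 V (Defs.sfun p) * (2 * x2 p)); 'D_1 V (Defs.sfun p) * (2 * x3 p)]`_j.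
Proof.
apply/colP => j; rewrite !mxE.
have := is_derive_Vs V hV p (delta_mx ord0 (lshift 3 j)) => -[_ ->].
case: j => [[|[|[|[|//]]]] Hj]; rewrite /dVs /dsfun /x0 /x1 /x2 /x3 !mxE /=; ring.
Qed.

Lemma part_ii I1 delta V (hV : smooth V) (hI1 : 0 < I1) (p : pt) :
      hamvf (Ham I1 delta V) p =
        (2 * I1)^-1 *: hamvf (@lsq R) p
        + (delta * L3 p / I1) *: hamvf (@L3 R) p
        - (2 : R)^-1 *: Vterm V p.
Proof.
have I0 : I1 != 0 by rewrite gt_eqF.
rewrite /hamvf /Vterm (grad_Ham I1 delta V hV) grad_lsq grad_L3 Bplus_expl !ham7 (gradx_Vs V hV).
apply/rowP; case => [[|[|[|[|[|[|[|//]]]]]]] Hi];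
  (rewrite ?(ordL Hi isT) ?(ordR Hi isT isT));
  rewrite !(mxE, splitL, splitR) /= ?big_ord_recr ?big_ord0 /= ?mxE /=;
  try field.
all: try by [].
Qed.

End S.

Section S2.
Variable R : realType.
Notation pt := 'rV[R]_7.
Local Notation row7 := (@row7 R).

Lemma hamvf_lz (q : pt) : hamvf (@lz R) q =
  row7 [:: 2^-1 * x3 q; - (2^-1 * x2 q); 2^-1 * x1 q; - (2^-1 * x0 q); - ly q; lx q; 0].
Proof.
rewrite /hamvf grad_lz Bplus_expl ham7; apply/rowP; case => [[|[|[|[|[|[|[|//]]]]]]] Hi];
  rewrite !mxE /=; ring.
Qed.

Definition nx (q : pt) : R := x0 q ^+ 2 + x1 q ^+ 2 + x2 q ^+ 2 + x3 q ^+ 2.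

Lemma hamvf_L3 (q : pt) : hamvf (@L3 R) q =
  row7 [:: 2^-1 * nx q * x3 q; 2^-1 * nx q * x2 q; - (2^-1 * nx q * x1 q);
          - (2^-1 * nx q * x0 q); 0; 0; 0].
Proof.
rewrite /hamvf grad_L3 Bplus_expl ham7; apply/rowP; case => [[|[|[|[|[|[|[|//]]]]]]] Hi];
  rewrite !mxE /= /nx /Defs.sfun; field; rewrite ?pnatr_eq0 //.
Qed.

Lemma is_derive_entry (Y : R -> pt) (t : R) (d : pt) j :
  is_derive t 1 Y d -> is_derive t 1 (fun s => Y s ord0 j) (d ord0 j).
Proof.
move=> [dd dv]; apply: DeriveDef.
  by move/derivable_mxP: dd; apply.
by rewrite -dv derive_mx // mxE.
Qed.

Lemma is_derive_row (Y : R -> pt) (t : R) (d : pt) :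
  (forall j, is_derive t 1 (fun s => Y s ord0 j) (d ord0 j)) -> is_derive t 1 Y d.
Proof.
move=> H.
have dd : derivable Y t 1.
  by apply/derivable_mxP => i j; rewrite (ord1 i); case: (H j).
apply: DeriveDef => //.
rewrite derive_mx //; apply/matrixP => i j; rewrite mxE (ord1 i).
by case: (H j).
Qed.

Lemma is_derive_row7 (L : R -> seq R) (t : R) (d : pt) :
  (forall j : 'I_7, is_derive t 1 (fun s => (L s)`_j) (d ord0 j)) ->
  is_derive t 1 (fun s => row7 (L s)) d.
Proof.
move=> H; apply: is_derive_row => j.
have -> : (fun s => row7 (L s) ord0 j) = (fun s => (L s)`_j).
  by apply/funext => s; rewrite mxE.
exact: H.
Qed.

Lemma is_derive_lin (k t : R) : is_derive t 1 (fun s : R => k * s) k.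
Proof.
apply: is_derive_eq (is_deriveM (is_derive_cst k t 1) (is_derive_id t 1)) _.
by rewrite /cst /= -![_ *: _]/(_ * _); ring.
Qed.

Lemma is_derive_trig (a b k t : R) :
  is_derive t 1 (fun s => a * cos (k * s) + b * sin (k * s))
    (k * (b * cos (k * t) - a * sin (k * t))).
Proof.
have hc := is_derive1_comp (is_derive_cos (k * t)) (is_derive_lin k t).
have hs := is_derive1_comp (is_derive_sin (k * t)) (is_derive_lin k t).
have := is_deriveD (is_deriveM (is_derive_cst a t 1) hc) (is_deriveM (is_derive_cst b t 1) hs).
move=> H; apply: is_derive_eq H _.
by rewrite /cst /= -![_ *: _]/(_ * _); ring.
Qed.

Definition inner7 (u w : pt) : R :=
  x0 u * x0 w + x1 u * x1 w + x2 u * x2 w + x3 u * x3 w + lx u * lx w + ly u * ly w + lz u * lz w.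

Lemma is_derive_sq7 (Y : R -> pt) (t : R) dY : is_derive t 1 Y dY ->
  is_derive t 1 (fun s => inner7 (Y s) (Y s)) (2 * inner7 (Y t) dY).
Proof.
move=> HY.
have h := fun j => is_deriveM (is_derive_entry _ _ _ j HY) (is_derive_entry _ _ _ j HY).
have := is_deriveD (is_deriveD (is_deriveD (is_deriveD (is_deriveD (is_deriveD
  (h (@Ordinal 7 0 isT)) (h (@Ordinal 7 1 isT))) (h (@Ordinal 7 2 isT)))
  (h (@Ordinal 7 3 isT))) (h (@Ordinal 7 4 isT))) (h (@Ordinal 7 5 isT))) (h (@Ordinal 7 6 isT)).
move=> H; apply: is_derive_eq H _.
by rewrite /inner7 /x0 /x1 /x2 /x3 /lx /ly /lz /= -![_ *: _]/(_ * _); ring.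
Qed.

Lemma ord7P (P : 'I_7 -> Prop) : P (@Ordinal 7 0 isT) -> P (@Ordinal 7 1 isT) ->
  P (@Ordinal 7 2 isT) -> P (@Ordinal 7 3 isT) -> P (@Ordinal 7 4 isT) ->
  P (@Ordinal 7 5 isT) -> P (@Ordinal 7 6 isT) -> forall i, P i.
Proof.
move=> ? ? ? ? ? ? ? [[|[|[|[|[|[|[|//]]]]]]] Hi]; by rewrite (eq_irrelevance Hi isT).
Qed.

Lemma sq7_eq0 (u : pt) : inner7 u u = 0 -> u = 0.
Proof.
rewrite /inner7 => H.
have h0 := sqr_ge0 (x0 u); have h1 := sqr_ge0 (x1 u); have h2 := sqr_ge0 (x2 u);
have h3 := sqr_ge0 (x3 u); have h4 := sqr_ge0 (lx u); have h5 := sqr_ge0 (ly u);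
have h6 := sqr_ge0 (lz u).
have z : forall a : R, a ^+ 2 = 0 -> a = 0 by move=> a /eqP; rewrite sqrf_eq0 => /eqP.
apply/rowP; apply: ord7P; rewrite mxE; apply: z; rewrite /x0 /x1 /x2 /x3 /lx /ly /lz in H h0 h1 h2 h3 h4 h5 h6 *;
  rewrite !expr2 in h0 h1 h2 h3 h4 h5 h6 *; lra.
Qed.

Lemma uniq_flow (y z : R -> pt) (A : pt -> pt) :
  (forall t : R, is_derive t 1 y (A (y t))) -> (forall t : R, is_derive t 1 z (A (z t))) ->
  (forall u w, inner7 (u - w) (A u - A w) = 0) -> y 0 = z 0 -> forall t : R, y t = z t.
Proof.
move=> hy hz hA h0 t.
have hd : forall s : R, is_derive s 1 (fun r => inner7 (y r - z r) (y r - z r)) 0.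
  move=> s; apply: is_derive_eq (is_derive_sq7 _ _ _ (is_deriveB (hy s) (hz s))) _.
  by rewrite hA mulr0.
have := @is_derive_0_is_cst _ _ t 0 hd.
rewrite h0 subrr.
have -> : inner7 0 0 = 0 by rewrite /inner7 /x0 /x1 /x2 /x3 /lx /ly /lz !mxE; ring.
by move=> /sq7_eq0 /eqP; rewrite subr_eq0 => /eqP.
Qed.

Definition zphi (p : pt) (s : R) : pt := row7
  [:: x0 p * cos (2^-1 * s) + x3 p * sin (2^-1 * s);
      x1 p * cos (2^-1 * s) + (- x2 p) * sin (2^-1 * s);
      x2 p * cos (2^-1 * s) + x1 p * sin (2^-1 * s);
      x3 p * cos (2^-1 * s) + (- x0 p) * sin (2^-1 * s);
      lx p * cos (1 * s) + (- ly p) * sin (1 * s);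
      ly p * cos (1 * s) + lx p * sin (1 * s);
      lz p].

Definition zpsi (p : pt) (s : R) : pt := row7
  [:: x0 p * cos (2^-1 * s) + x3 p * sin (2^-1 * s);
      x1 p * cos (2^-1 * s) + x2 p * sin (2^-1 * s);
      x2 p * cos (2^-1 * s) + (- x1 p) * sin (2^-1 * s);
      x3 p * cos (2^-1 * s) + (- x0 p) * sin (2^-1 * s);
      lx p; ly p; lz p].

Ltac unco := rewrite /x0 /x1 /x2 /x3 /lx /ly /lz.

Lemma zphi_d p (t : R) : is_derive t 1 (zphi p) (hamvf (@lz R) (zphi p t)).
Proof.
rewrite hamvf_lz /zphi; apply: is_derive_row7; apply: ord7P => /=;
  (apply: is_derive_eq (is_derive_trig _ _ _ t) _ || apply: is_derive_eq (is_derive_cst _ t 1) _);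
  unco; rewrite !mxE /=; ring.
Qed.

Lemma nx_zpsi p t : nx (zpsi p t) = nx p * (cos (2^-1 * t) ^+ 2 + sin (2^-1 * t) ^+ 2).
Proof. rewrite /nx; unco; rewrite !mxE /=; unco; ring. Qed.

Lemma nx_zphi p t : nx (zphi p t) = nx p * (cos (2^-1 * t) ^+ 2 + sin (2^-1 * t) ^+ 2).
Proof. rewrite /nx; unco; rewrite !mxE /=; unco; ring. Qed.

Lemma zpsi_d p (t : R) : nx p = 1 -> is_derive t 1 (zpsi p) (hamvf (@L3 R) (zpsi p t)).
Proof.
move=> Mp; rewrite hamvf_L3 nx_zpsi Mp cos2Dsin2 mulr1 /zpsi; apply: is_derive_row7; apply: ord7P => /=;
  (apply: is_derive_eq (is_derive_trig _ _ _ t) _ || apply: is_derive_eq (is_derive_cst _ t 1) _);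
  unco; rewrite !mxE /=; unco; ring.
Qed.

Lemma zphi0 p : zphi p 0 = p.
Proof. apply/rowP; apply: ord7P; rewrite !mxE /= ?mulr0 ?cos0 ?sin0; unco; ring. Qed.

Lemma zpsi0 p : zpsi p 0 = p.
Proof. apply/rowP; apply: ord7P; rewrite !mxE /= ?mulr0 ?cos0 ?sin0; unco; ring. Qed.

Lemma is_derive_nx (Y : R -> pt) (t : R) dY : is_derive t 1 Y dY ->
  is_derive t 1 (fun s => nx (Y s))
    (2 * (x0 (Y t) * x0 dY + x1 (Y t) * x1 dY + x2 (Y t) * x2 dY + x3 (Y t) * x3 dY)).
Proof.
move=> HY.
have h := fun j => is_deriveX 2 (is_derive_entry _ _ _ j HY).
have := is_deriveD (is_deriveD (is_deriveD
  (h (@Ordinal 7 0 isT)) (h (@Ordinal 7 1 isT))) (h (@Ordinal 7 2 isT)))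
  (h (@Ordinal 7 3 isT)).
move=> H; apply: is_derive_eq H _.
by rewrite /nx; unco; rewrite /= -![_ *: _]/(_ * _); ring.
Qed.

Lemma phi_eq phi : is_flow_on (@Mset R) (hamvf (@lz R)) phi ->
  forall p, Mset p -> forall t, phi t p = zphi p t.
Proof.
move=> H p Mp; have [h0 hd] := H p Mp.
apply: (uniq_flow (fun s => phi s p) (zphi p) (hamvf (@lz R))).
- exact: zphi_d.
- move=> u w; rewrite !hamvf_lz /inner7; unco; rewrite !mxE /=; ring.
- by rewrite h0 zphi0.
Qed.

Lemma psi_eq psi : is_flow_on (@Mset R) (hamvf (@L3 R)) psi ->
  forall p, Mset p -> forall t, psi t p = zpsi p t.
Proof.
move=> H p Mp; have [h0 hd] := H p Mp.
have hN : forall s, nx (psi s p) = 1.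
  move=> s.
  have hc : forall r : R, is_derive r 1 (fun r => nx (psi r p)) 0.
    move=> r; apply: is_derive_eq (is_derive_nx _ _ _ (hd r)) _.
    rewrite hamvf_L3; unco; rewrite !mxE /=; ring.
  by rewrite (@is_derive_0_is_cst _ _ s 0 hc) h0.
pose A1 := fun q : pt => row7 [:: 2^-1 * x3 q; 2^-1 * x2 q; - (2^-1 * x1 q); - (2^-1 * x0 q); 0; 0; 0].
have hA1 : forall q, nx q = 1 -> hamvf (@L3 R) q = A1 q.
  by move=> q hq; rewrite hamvf_L3 hq mulr1.
apply: (uniq_flow (fun s => psi s p) (zpsi p) A1).
- by move=> s; apply: is_derive_eq (hd s) _; exact: hA1.
- move=> s; apply: is_derive_eq (zpsi_d p s Mp) _; apply: hA1.
  by rewrite nx_zpsi (Mp : nx p = 1) cos2Dsin2 mulr1.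
- move=> u w; rewrite /A1 /inner7; unco; rewrite !mxE /=; ring.
- by rewrite h0 zpsi0.
Qed.

Definition T4 : R := (pi *+ 2) *+ 2.

Lemma half4pi : 2^-1 * T4 = pi *+ 2.
Proof.
have h2 : (2:R)^-1 * 2 = 1 by rewrite mulVf // pnatr_eq0.
by rewrite /T4 -[X in _ * X]mulr_natl mulrA h2 mul1r.
Qed.

Lemma one4pi : 1 * T4 = pi *+ 2 + pi *+ 2.
Proof. by rewrite mul1r /T4 mulr2n. Qed.

Lemma zphi_per p : zphi p T4 = p.
Proof.
apply/rowP; apply: ord7P; rewrite !mxE /= ?half4pi ?one4pi ?cosD2pi ?sinD2pi ?cos2pi ?sin2pi; unco; ring.
Qed.

Lemma zpsi_per p : zpsi p T4 = p.
Proof.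
apply/rowP; apply: ord7P; rewrite !mxE /= ?half4pi ?cos2pi ?sin2pi; unco; ring.
Qed.

Lemma zcomm p s t : zphi (zpsi p t) s = zpsi (zphi p s) t.
Proof.
(apply/rowP; apply: ord7P; rewrite !mxE /=; unco; rewrite !mxE /=; ring).
Qed.

Lemma part_iii :
  ((exists phi, is_flow_on (@Mset R) (hamvf (@lz R)) phi) /\
   (exists psi, is_flow_on (@Mset R) (hamvf (@L3 R)) psi) /\
   exists T1 T2 : R, 0 < T1 /\ 0 < T2 /\
     forall phi psi,
       is_flow_on (@Mset R) (hamvf (@lz R)) phi ->
       is_flow_on (@Mset R) (hamvf (@L3 R)) psi ->
       (forall p, Mset p -> phi T1 p = p) /\
       (forall p, Mset p -> psi T2 p = p) /\
       (forall (s t : R) p, Mset p -> phi s (psi t p) = psi t (phi s p))).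
Proof.
split.
  exists (fun t p => zphi p t) => p Mp; split; [exact: zphi0 | exact: zphi_d].
split.
  exists (fun t p => zpsi p t) => p Mp; split; [exact: zpsi0 | move=> t; exact: zpsi_d].
have p4 : 0 < T4.
  by rewrite /T4 pmulrn_rgt0 // pmulrn_rgt0 // pi_gt0.
exists T4, T4; split => //; split => //.
move=> phi psi Hphi Hpsi; split; [|split].
- (by move=> p Mp; rewrite (phi_eq _ Hphi p Mp) zphi_per).
- by move=> p Mp; rewrite (psi_eq _ Hpsi p Mp) zpsi_per.
- move=> s t p Mp.
  have M1 : Mset (zpsi p t).
    (by have := nx_zpsi p t; rewrite (Mp : nx p = 1) cos2Dsin2 mulr1).
  have M2 : Mset (zphi p s).
    by have := nx_zphi p s; rewrite (Mp : nx p = 1) cos2Dsin2 mulr1.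
  rewrite (psi_eq _ Hpsi p Mp t) (phi_eq _ Hphi p Mp s) (phi_eq _ Hphi _ M1 s) (psi_eq _ Hpsi _ M2 t).
  exact: zcomm.
Qed.

End S2.

Section S3.
Variable R : realType.
Notation pt := 'rV[R]_7.
Local Notation row7 := (@row7 R).
Local Notation nx := (@nx R).

Definition fa (p : pt) : R := 2 * (- x0 p * x2 p + x1 p * x3 p).
Definition fb (p : pt) : R := 2 * (x0 p * x1 p + x2 p * x3 p).
Definition fdet (p : pt) : R := lx p * fb p - ly p * fa p.

Lemma free_at (I1 delta : R) (V : R -> R) (hV : smooth V) (hI1 : 0 < I1) (p : pt) :
  nx p = 1 -> fdet p != 0 ->
  free [:: hamvf (Ham I1 delta V) p; hamvf (@L3 R) p; hamvf (@lz R) p].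
Proof.
move=> Mp fp.
rewrite hamvf_L3 hamvf_lz Mp /hamvf (grad_Ham _ I1 delta V hV) Bplus_expl ham7.
match goal with |- is_true (free [:: ?a; ?b; ?c]) => apply/(@freeP _ _ 3 [tuple a; b; c]) end => k.
rewrite !big_ord_recl big_ord0 addr0 => h.
pose c := (2 * I1)^-1; pose K := delta * (2 * L3 p).
pose G0 := c * (2 * lx p + K * fa p).
pose G1 := c * (2 * ly p + K * fb p).
pose G2 := c * (2 * lz p + K * Defs.sfun p).
have lc : forall A B T : R, A = B -> T = A -> B = 0 -> T = 0 by move=> A B T -> -> .
have F0 := congr1 (fun M : pt => x1 p * M ord0 (@Ordinal 7 0 isT) - x0 p * M ord0 (@Ordinal 7 1 isT)
   - x3 p * M ord0 (@Ordinal 7 2 isT) + x2 p * M ord0 (@Ordinal 7 3 isT)) h.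
have F1 := congr1 (fun M : pt => x2 p * M ord0 (@Ordinal 7 0 isT) + x3 p * M ord0 (@Ordinal 7 1 isT)
   - x0 p * M ord0 (@Ordinal 7 2 isT) - x1 p * M ord0 (@Ordinal 7 3 isT)) h.
have F2 := congr1 (fun M : pt => x3 p * M ord0 (@Ordinal 7 0 isT) - x2 p * M ord0 (@Ordinal 7 1 isT)
   + x1 p * M ord0 (@Ordinal 7 2 isT) - x0 p * M ord0 (@Ordinal 7 3 isT)) h.
rewrite /= !mxE /= in F0 F1 F2.
have T0 : 2^-1 * (k ord0 * nx p * G0 + k (lift ord0 ord0) * fa p) = 0.
  apply: (lc _ _ _ F0); last ring.
  rewrite /G0 /c /K /nx /fa; ring.
have T1 : 2^-1 * (k ord0 * nx p * G1 + k (lift ord0 ord0) * fb p) = 0.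
  apply: (lc _ _ _ F1); last ring.
  rewrite /G1 /c /K /nx /fb; ring.
have T2 : 2^-1 * (k ord0 * nx p * G2 + k (lift ord0 ord0) * Defs.sfun p + k (lift ord0 (lift ord0 ord0)) * nx p) = 0.
  apply: (lc _ _ _ F2); last ring.
  rewrite /G2 /c /K /nx /Defs.sfun; ring.
clear F0 F1 F2 h.
have hz : forall X : R, 2^-1 * X = 0 -> X = 0.
  by move=> X /eqP; rewrite mulf_eq0 invr_eq0 pnatr_eq0 orFb => /eqP.
move: T0 T1 T2; rewrite Mp !mulr1 => /hz T0 /hz T1 /hz T2.
have c0 : c != 0 by rewrite /c invr_eq0 mulf_neq0 // gt_eqF.
have K0 : k ord0 = 0.
  have : k ord0 * (c * 2 * fdet p) = fb p * (k ord0 * G0 + k (lift ord0 ord0) * fa p)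
     - fa p * (k ord0 * G1 + k (lift ord0 ord0) * fb p) by rewrite /G0 /G1 /fdet; ring.
  rewrite T0 T1 !mulr0 subr0 => /eqP; rewrite !mulf_eq0 (negbTE c0) (negbTE fp) pnatr_eq0 /= !orbF.
  by move/eqP.
rewrite K0 !mul0r !add0r in T0 T1 T2.
have K1 : k (lift ord0 ord0) = 0.
  apply/eqP; apply: contraNT fp => k1.
  move/eqP: T0; rewrite mulf_eq0 (negbTE k1) /= => /eqP fa0.
  move/eqP: T1; rewrite mulf_eq0 (negbTE k1) /= => /eqP fb0.
  by rewrite /fdet fa0 fb0 !mulr0 subrr.
rewrite K1 mul0r add0r in T2.
case => [[|[|[|//]]] Hi].
- by have -> : Ordinal Hi = ord0 by apply: val_inj.
- by have -> : Ordinal Hi = lift ord0 ord0 by apply: val_inj.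
- by have -> : Ordinal Hi = lift ord0 (lift ord0 ord0) by apply: val_inj.
Qed.
Lemma fdet_cont (q : pt) : {for q, continuous fdet}.
Proof.
apply: differentiable_continuous.
have dc : forall j, differentiable (fun r : pt => r ord0 j) q := fun j => differentiable_coord q ord0 j.
have d2 : differentiable (cst (2:R) : pt -> R) q := differentiable_cst _ q.
pose o := fun k (H : (k < 7)%N) => dc (Ordinal H).
exact: (differentiableB (differentiableM (o 4%N isT) (differentiableM d2
    (differentiableD (differentiableM (o 0%N isT) (o 1%N isT)) (differentiableM (o 2%N isT) (o 3%N isT)))))
  (differentiableM (o 5%N isT) (differentiableM d2
    (differentiableD (differentiableM (differentiableN (o 0%N isT)) (o 2%N isT)) (differentiableM (o 1%N isT) (o 3%N isT)))))).
Qed.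

Lemma open_fdet : open [set q : pt | fdet q != 0].
Proof.
have -> : [set q : pt | fdet q != 0] = fdet @^-1` [set y : R | y != 0] by [].
apply: open_comp; last exact: open_neq.
by move=> q _; exact: fdet_cont.
Qed.

Lemma sq2_eq0 (a b : R) : a ^+ 2 + b ^+ 2 = 0 -> a = 0 /\ b = 0.
Proof.
move=> h; have ha := sqr_ge0 a; have hb := sqr_ge0 b.
have za : a ^+ 2 = 0 by lra.
have zb : b ^+ 2 = 0 by lra.
by move/eqP: za; rewrite sqrf_eq0 => /eqP; move/eqP: zb; rewrite sqrf_eq0 => /eqP.
Qed.

Lemma coord_bnd (q : pt) : nx q = 1 ->
  [/\ -1 <= x0 q <= 1, -1 <= x1 q <= 1, -1 <= x2 q <= 1 & -1 <= x3 q <= 1].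
Proof.
rewrite /nx => h.
have h0 := sqr_ge0 (x0 q); have h1 := sqr_ge0 (x1 q); have h2 := sqr_ge0 (x2 q); have h3 := sqr_ge0 (x3 q).
rewrite !expr2 in h h0 h1 h2 h3.
by split; apply/andP; split; nra.
Qed.

Lemma fab_bnd (q : pt) : nx q = 1 -> -1 <= fa q <= 1 /\ -1 <= fb q <= 1.
Proof.
rewrite /nx /fa /fb => h.
have h0 := sqr_ge0 (x0 q + x2 q); have h1 := sqr_ge0 (x1 q - x3 q);
have h2 := sqr_ge0 (x0 q - x2 q); have h3 := sqr_ge0 (x1 q + x3 q);
have h4 := sqr_ge0 (x0 q - x1 q); have h5 := sqr_ge0 (x2 q - x3 q);
have h6 := sqr_ge0 (x0 q + x1 q); have h7 := sqr_ge0 (x2 q + x3 q).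
rewrite !expr2 in h h0 h1 h2 h3 h4 h5 h6 h7.
by split; apply/andP; split; nra.
Qed.

End S3.

Arguments coord_bnd {R q}. Arguments sq2_eq0 {R a b}. Arguments fab_bnd {R q}.
Section S4.
Variable R : realType.
Notation pt := 'rV[R]_7.
Local Notation row7 := (@row7 R).
Local Notation nx := (@nx R).
Local Notation fa := (@fa R).
Local Notation fb := (@fb R).
Local Notation fdet := (@fdet R).

Lemma cs_facts (d : R) : 0 < d -> d <= 1/16 ->
  let c := (1 - d ^+ 2) / (1 + d ^+ 2) in let s := 2 * d / (1 + d ^+ 2) in
  [/\ c ^+ 2 + s ^+ 2 = 1, 1 - d <= c <= 1, 0 < c & 0 < s <= 2 * d].
Proof.
move=> d0 d1 c s.
have hD : 0 < 1 + d ^+ 2 by rewrite expr2; nra.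
have cD : c * (1 + d ^+ 2) = 1 - d ^+ 2 by rewrite /c mulfVK // gt_eqF.
have sD : s * (1 + d ^+ 2) = 2 * d by rewrite /s mulfVK // gt_eqF.
rewrite !expr2 in hD cD sD *.
split.
- have : (c * c + s * s) * ((1 + d * d) * (1 + d * d)) = 1 * ((1 + d * d) * (1 + d * d)).
    have -> : (c * c + s * s) * ((1 + d * d) * (1 + d * d)) =
      (c * (1 + d * d)) * (c * (1 + d * d)) + (s * (1 + d * d)) * (s * (1 + d * d)) by ring.
    rewrite cD sD; ring.
  move/mulIf; apply; rewrite mulf_neq0 // gt_eqF //.
- apply/andP; split; nra.
- nra.
- apply/andP; split; nra.
Qed.

Ltac unco := rewrite /x0 /x1 /x2 /x3 /lx /ly /lz.

Lemma step1 (p : pt) (d : R) : nx p = 1 -> 0 < d -> d <= 1/16 ->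
  exists q1 : pt, [/\ nx q1 = 1, fa q1 ^+ 2 + fb q1 ^+ 2 != 0 &
    forall j, `|p ord0 j - q1 ord0 j| <= 2 * d].
Proof.
move=> Mp d0 d1.
case: (eqVneq (fa p ^+ 2 + fb p ^+ 2) 0) => hab; last first.
  exists p; split => // j; rewrite subrr normr0; lra.
have [c1 /andP[clo chi] cpos /andP[spos shi]] := cs_facts d d0 d1.
move: c1 clo chi cpos spos shi.
set c := (1 - d ^+ 2) / (1 + d ^+ 2); set s := 2 * d / (1 + d ^+ 2) => c1 clo chi cpos spos shi.
have ZW : (x0 p ^+ 2 + x3 p ^+ 2) * (x1 p ^+ 2 + x2 p ^+ 2) = 0.
  have : 4 * ((x0 p ^+ 2 + x3 p ^+ 2) * (x1 p ^+ 2 + x2 p ^+ 2)) = 0.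
    by rewrite -hab /fa /fb; ring.
  by move/eqP; rewrite mulf_eq0 pnatr_eq0 /= => /eqP.
have [b0 b1 b2 b3] := coord_bnd Mp.
move/eqP: ZW; rewrite mulf_eq0 => /orP[] /eqP.
- move=> /sq2_eq0 [e0 e3].
  have W1 : x1 p ^+ 2 + x2 p ^+ 2 = 1 by move: Mp; rewrite /nx e0 e3; lra.
  exists (row7 [:: s; c * x1 p; c * x2 p; 0; lx p; ly p; lz p]); split.
  + rewrite /nx; unco; rewrite !mxE /=; rewrite -/(x1 p) -/(x2 p).
    have -> : s ^+ 2 + (c * x1 p) ^+ 2 + (c * x2 p) ^+ 2 + 0 ^+ 2 = s ^+ 2 + c ^+ 2 * (x1 p ^+ 2 + x2 p ^+ 2) by ring.
    by rewrite W1 mulr1 addrC.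
  + rewrite /fa /fb; unco; rewrite !mxE /=; rewrite -/(x1 p) -/(x2 p).
    have -> : (2 * (- s * (c * x2 p) + c * x1 p * 0)) ^+ 2 + (2 * (s * (c * x1 p) + c * x2 p * 0)) ^+ 2
      = 4 * (s * c) ^+ 2 * (x1 p ^+ 2 + x2 p ^+ 2) by ring.
    by rewrite W1 mulr1 mulf_neq0 ?pnatr_eq0 // sqrf_eq0 mulf_neq0 // gt_eqF.
  + apply: ord7P; rewrite !mxE /= -/(x0 p) -/(x1 p) -/(x2 p) -/(x3 p) -/(lx p) -/(ly p) -/(lz p) ?e0 ?e3;
      rewrite ler_norml; apply/andP; split; nra.
- move=> /sq2_eq0 [e1 e2].
  have Z1 : x0 p ^+ 2 + x3 p ^+ 2 = 1 by move: Mp; rewrite /nx e1 e2; lra.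
  exists (row7 [:: c * x0 p; s; 0; c * x3 p; lx p; ly p; lz p]); split.
  + rewrite /nx; unco; rewrite !mxE /=; rewrite -/(x0 p) -/(x3 p).
    have -> : (c * x0 p) ^+ 2 + s ^+ 2 + 0 ^+ 2 + (c * x3 p) ^+ 2 = s ^+ 2 + c ^+ 2 * (x0 p ^+ 2 + x3 p ^+ 2) by ring.
    by rewrite Z1 mulr1 addrC.
  + rewrite /fa /fb; unco; rewrite !mxE /=; rewrite -/(x0 p) -/(x3 p).
    have -> : (2 * (- (c * x0 p) * 0 + s * (c * x3 p))) ^+ 2 + (2 * (c * x0 p * s + 0 * (c * x3 p))) ^+ 2
      = 4 * (s * c) ^+ 2 * (x0 p ^+ 2 + x3 p ^+ 2) by ring.
    by rewrite Z1 mulr1 mulf_neq0 ?pnatr_eq0 // sqrf_eq0 mulf_neq0 // gt_eqF.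
  + apply: ord7P; rewrite !mxE /= -/(x0 p) -/(x1 p) -/(x2 p) -/(x3 p) -/(lx p) -/(ly p) -/(lz p) ?e1 ?e2; rewrite ler_norml;
      apply/andP; split; nra.
Qed.

Lemma approx (p : pt) : nx p = 1 -> forall e : R, 0 < e ->
  exists q : pt, [/\ nx q = 1, fdet q != 0 & forall j, `|p ord0 j - q ord0 j| < e].
Proof.
move=> Mp e e0.
have [d [d0 de d1]] : exists d : R, [/\ 0 < d, 8 * d < e & d <= 1/16].
  by case: (lerP e 1) => he; [exists (e / 16) | exists (1/16)]; split; lra.
have [q1 [M1 ab1 n1]] := step1 _ _ Mp d0 d1.
have [fa1 fb1] := fab_bnd M1.
case: (eqVneq (fdet q1) 0) => hf; last first.
  exists q1; split => // j; apply: le_lt_trans (n1 j) _; lra.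
pose q := row7 [:: x0 q1; x1 q1; x2 q1; x3 q1; lx q1 + d * fb q1; ly q1 - d * fa q1; lz q1].
have fq : fdet q = fdet q1 + d * (fa q1 ^+ 2 + fb q1 ^+ 2).
  rewrite /q /fdet /fa /fb; unco; rewrite !mxE /=; unco; ring.
exists q; split.
- by rewrite /q /nx; unco; rewrite !mxE /=; exact: M1.
- by rewrite fq hf add0r mulf_neq0 // gt_eqF.
- suff H : forall j, `|p ord0 j - q1 ord0 j| <= 2 * d -> `|p ord0 j - q ord0 j| < e.
    by move=> j; apply: H (n1 j).
  apply: ord7P; rewrite /q !mxE /=;
  unco; rewrite ler_norml ltr_norml => /andP[lo hi]; apply/andP; split;
  move: fa1 fb1 => /andP[fa1 fa2] /andP[fb1 fb2]; nra.
Qed.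

Definition Uset : set pt := [set q : pt | fdet q != 0] `&` (@Mset R).

Lemma Uset_dense : open_dense_in (@Mset R) Uset.
Proof.
split; first by move=> q [].
split; first by exists [set q : pt | fdet q != 0]; split; [exact: open_fdet | by []].
move=> p Mp B /nbhs_ballP [e e0 hB].
have [q [Mq fq nq]] := approx p (Mp : nx p = 1) e e0.
exists q; split; first by split => //.
apply: hB; rewrite -ball_normE /ball_ /Num.Def.normr /= mx_normrE.
apply: bigmax_lt => // -[i j] _; rewrite !mxE (ord1 i) /=; exact: nq.
Qed.

End S4.

Theorem theorem1 (R : realType) (I1 delta : R) (V : R -> R)
  (hI1 : 0 < I1) (hV : smooth V) :
  (* (i) H, l_z, L_3 pairwise Poisson commute w.r.t. B_+ *)
  (forall p : 'rV[R]_7,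
      pbracket (Ham I1 delta V) (@lz R) p = 0 /\
      pbracket (Ham I1 delta V) (@L3 R) p = 0 /\
      pbracket (@lz R) (@L3 R) p = 0)
  /\
  (* (ii) decomposition of X_H *)
  (forall p : 'rV[R]_7,
      hamvf (Ham I1 delta V) p =
        (2 * I1)^-1 *: hamvf (@lsq R) p
        + (delta * L3 p / I1) *: hamvf (@L3 R) p
        - (2 : R)^-1 *: Vterm V p)
  /\
  (* (iii) the flows of X_{l_z} and X_{L_3} (on M) exist, are periodic and commute *)
  ((exists phi, is_flow_on (@Mset R) (hamvf (@lz R)) phi) /\
   (exists psi, is_flow_on (@Mset R) (hamvf (@L3 R)) psi) /\
   exists T1 T2 : R, 0 < T1 /\ 0 < T2 /\
     forall phi psi,
       is_flow_on (@Mset R) (hamvf (@lz R)) phi ->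
       is_flow_on (@Mset R) (hamvf (@L3 R)) psi ->
       (forall p, Mset p -> phi T1 p = p) /\
       (forall p, Mset p -> psi T2 p = p) /\
       (forall (s t : R) p, Mset p -> phi s (psi t p) = psi t (phi s p)))
  /\
  (* (iv) X_H, X_{L_3}, X_{l_z} linearly independent on an open dense subset of M *)
  (exists U : set 'rV[R]_7, open_dense_in (@Mset R) U /\
     forall p, U p ->
       free [:: hamvf (Ham I1 delta V) p; hamvf (@L3 R) p; hamvf (@lz R) p]).
Proof.
split; first by move=> p; exact: (part_i R I1 delta V hV hI1 p).
split; first by move=> p; exact: (part_ii R I1 delta V hV hI1 p).
split; first exact: (part_iii R).
exists (Uset R); split; first exact: Uset_dense.
by move=> p [fp Mp]; exact: (free_at R I1 delta V hV hI1 p Mp fp).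
Qed.
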